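(* Let $n,d$ be positive integers. If $n\geq \frac{d^2}{2}$, then $d\in A_n$.
   Context: A walk is a finite sequence $z_0,z_1,\dots,z_l$ of Gaussian integers with $|z_{j+1}-z_j|=1$ for all $0\le j<l$. For natural numbers $n,d$, $n$ is called $d$-avoidable if there exists a walk $(z_j)$ and indices $r,s$ with $z_r-z_s=n$ such that $z_t-z_u\neq d$ for all indices $t,u$. $A_n$ denotes the set of all $d\in\mathbb{N}$ such that $n$ is not $d$-avoidable. *)

(* Defs.v *)
(* Gaussian integers represented as pairs of integers (Re, Im). *)
From Stdlib Require Import ZArith List.
Import ListNotations.
Open Scope Z_scope.

Definition gauss : Type := (Z * Z)%type.

Definition gsub (a b : gauss) : gauss := (fst a - fst b, snd a - snd b).

(* squared modulus; |z| = 1 iff |z|^2 = 1 *)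
Definition gnorm2 (a : gauss) : Z := fst a * fst a + snd a * snd a.

Definition gnat (m : nat) : gauss := (Z.of_nat m, 0).

Definition gat (w : list gauss) (j : nat) : gauss := nth j w (0, 0).

Definition is_walk (w : list gauss) : Prop :=
  w <> [] /\
  forall j : nat, (S j < length w)%nat -> gnorm2 (gsub (gat w (S j)) (gat w j)) = 1.

Definition avoidable (n d : nat) : Prop :=
  exists w : list gauss, is_walk w /\
    (exists r s : nat, (r < length w)%nat /\ (s < length w)%nat /\
        gsub (gat w r) (gat w s) = gnat n) /\
    (forall t u : nat, (t < length w)%nat -> (u < length w)%nat ->
        gsub (gat w t) (gat w u) <> gnat d).

Definition A (n : nat) (d : nat) : Prop := (0 < d)%nat /\ ~ avoidable n d.

(* Main.v *)
Require Import Defs.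
From Stdlib Require Import ZArith List.
From Stdlib Require Import Lia Psatz Classical.
Open Scope Z_scope.


Fixpoint zsum (f : nat -> Z) (n : nat) : Z :=
  match n with O => 0 | S n' => zsum f n' + f n' end.

Lemma zsum_ext : forall f g n, (forall t, (t < n)%nat -> f t = g t) -> zsum f n = zsum g n.
Proof. intros f g n; induction n; cbn [zsum]; intros H; auto.
  rewrite IHn by (intros; apply H; lia). rewrite H by lia. reflexivity. Qed.

Lemma zsum_add : forall f g n, zsum (fun t => f t + g t) n = zsum f n + zsum g n.
Proof. intros f g n; induction n; cbn [zsum]; auto. rewrite IHn; ring. Qed.

Lemma zsum_scal : forall c f n, zsum (fun t => c * f t) n = c * zsum f n.
Proof. intros c f n; induction n; cbn [zsum]; [ring| rewrite IHn; ring]. Qed.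

Lemma zsum_zero : forall n, zsum (fun _ => 0) n = 0.
Proof. induction n; cbn [zsum]; auto. rewrite IHn; ring. Qed.

Lemma zsum_tel : forall f n, zsum (fun t => f (S t) - f t) n = f n - f O.
Proof. intros f n; induction n; cbn [zsum]; [ring| rewrite IHn; ring]. Qed.

Lemma zsum_tel2 : forall f n, zsum (fun t => f t + f (S t)) n = 2 * zsum f n + f n - f O.
Proof. intros f n; induction n; cbn [zsum]; [ring| rewrite IHn; ring]. Qed.

Lemma zsum_even : forall f n, (forall t, (t < n)%nat -> Z.Even (f t)) -> Z.Even (zsum f n).
Proof. intros f n; induction n; cbn [zsum]; intros H. exists 0; lia.
  destruct IHn as [a Ha]. intros; apply H; lia. destruct (H n) as [b Hb]. lia.
  exists (a+b). lia. Qed.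

Lemma zsum_swap : forall F n m, zsum (fun u => zsum (fun t => F u t) m) n = zsum (fun t => zsum (fun u => F u t) n) m.
Proof. intros F n; induction n; cbn [zsum]; intros m.
  - rewrite zsum_zero; auto.
  - rewrite IHn. rewrite <- zsum_add. reflexivity. Qed.

Lemma zsum_nonneg : forall f n, (forall t, (t < n)%nat -> 0 <= f t) -> 0 <= zsum f n.
Proof. intros f n; induction n; cbn [zsum]; intros H. lia. assert (0 <= f n) by (apply H; lia).
  assert (0 <= zsum f n) by (apply IHn; intros; apply H; lia). lia. Qed.

Lemma zsum_ge1 : forall f n t0, (t0 < n)%nat -> (forall t, (t < n)%nat -> 0 <= f t) -> 1 <= f t0 -> 1 <= zsum f n.
Proof. intros f n; induction n; cbn [zsum]; intros t0 Ht0 H H1. lia.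
  assert (0 <= f n) by (apply H; lia).
  destruct (Nat.eq_dec t0 n). subst. assert (0 <= zsum f n) by (apply zsum_nonneg; intros; apply H; lia). lia.
  assert (1 <= zsum f n) by (apply (IHn t0); try lia; intros; apply H; lia). lia. Qed.

Definition ustep (p q : Z*Z) : Prop := Z.abs (fst q - fst p) + Z.abs (snd q - snd p) = 1.

Lemma ustep_cases : forall p q, ustep p q ->
  q = (fst p + 1, snd p) \/ q = (fst p - 1, snd p) \/ q = (fst p, snd p + 1) \/ q = (fst p, snd p - 1).
Proof. intros [a b] [c e]; unfold ustep; simpl; intros H.
  destruct (Z.abs_spec (c - a)) as [[? E1]|[? E1]]; destruct (Z.abs_spec (e - b)) as [[? E2]|[? E2]];
  rewrite E1, E2 in H.
  all: assert (c = a + 1 /\ e = b \/ c = a - 1 /\ e = b \/ c = a /\ e = b + 1 \/ c = a /\ e = b - 1) as HH by lia.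
  all: destruct HH as [[-> ->]|[[-> ->]|[[-> ->]|[-> ->]]]]; auto. Qed.

Lemma ustep_sym : forall p q, ustep p q -> ustep q p.
Proof. unfold ustep; intros; lia. Qed.

Definition cm (N a b : Z) : bool := Z.eqb ((a - b) mod N) 0.

Lemma cm_spec : forall N a b, N > 0 -> (cm N a b = true <-> exists m, a = b + m * N).
Proof. intros N a b HN; unfold cm; rewrite Z.eqb_eq; split.
  - intros H. pose proof (Z.div_mod (a - b) N ltac:(lia)). exists ((a - b) / N). lia.
  - intros [m Hm]. replace (a - b) with (m * N) by lia. apply Z.mod_mul; lia. Qed.

Lemma cm_trans : forall N a b c, N > 0 -> cm N a b = true -> cm N b c = true -> cm N a c = true.
Proof. intros N a b c HN H1 H2. apply cm_spec in H1; auto; apply cm_spec in H2; auto.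
  apply cm_spec; auto. destruct H1 as [m1 ?]; destruct H2 as [m2 ?]. exists (m1 + m2). lia. Qed.

Lemma cm_sym : forall N a b, N > 0 -> cm N a b = cm N b a.
Proof. intros N a b HN. destruct (cm N a b) eqn:E1; destruct (cm N b a) eqn:E2; auto.
  - apply cm_spec in E1; auto. destruct E1 as [m ?]. assert (cm N b a = true) by (apply cm_spec; auto; exists (-m); lia). congruence.
  - apply cm_spec in E2; auto. destruct E2 as [m ?]. assert (cm N a b = true) by (apply cm_spec; auto; exists (-m); lia). congruence. Qed.

Lemma cm_shift : forall N a b c, cm N (a + c) (b + c) = cm N a b.
Proof. intros; unfold cm. replace (a + c - (b + c)) with (a - b) by ring. reflexivity. Qed.

Definition hterm (z : nat -> Z*Z) (N x y : Z) (t : nat) : Z :=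
  if (Z.eqb (snd (z t)) (snd (z (S t))) && cm N (Z.min (fst (z t)) (fst (z (S t)))) x
      && Z.ltb (snd (z t)) y)%bool then 1 else 0.

Definition cnt z L N x y := zsum (hterm z N x y) L.

Definition oncyl (z : nat -> Z*Z) (L : nat) (N : Z) (p : Z*Z) :=
  exists t m, (t <= L)%nat /\ fst p = fst (z t) + m * N /\ snd p = snd (z t).

Lemma cnt_mod : forall z L N x x' y, N > 0 -> cm N x x' = true -> cnt z L N x y = cnt z L N x' y.
Proof. intros z L N x x' y HN H. unfold cnt. apply zsum_ext. intros t Ht. unfold hterm.
  destruct (cm N (Z.min (fst (z t)) (fst (z (S t)))) x) eqn:E1;
  destruct (cm N (Z.min (fst (z t)) (fst (z (S t)))) x') eqn:E2; auto.
  - assert (cm N (Z.min (fst (z t)) (fst (z (S t)))) x' = true) by (eapply cm_trans; eauto). congruence.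
  - rewrite cm_sym in H by auto.
    assert (cm N (Z.min (fst (z t)) (fst (z (S t)))) x = true) by (eapply cm_trans; eauto). congruence. Qed.

Lemma left_pt : forall (z : nat -> Z*Z) t, snd (z t) = snd (z (S t)) ->
  (z t = (Z.min (fst (z t)) (fst (z (S t))), snd (z t)) \/ z (S t) = (Z.min (fst (z t)) (fst (z (S t))), snd (z t))).
Proof. intros z t H. destruct (z t) as [a b] eqn:E1; destruct (z (S t)) as [c e] eqn:E2; simpl in *.
  subst. destruct (Z.le_ge_cases a c). left. rewrite Z.min_l; auto. right. rewrite Z.min_r; auto. Qed.

Lemma cnt_vert : forall z L N x y, N > 0 -> ~ oncyl z L N (x, y) ->
  cnt z L N x (y + 1) = cnt z L N x y.
Proof. intros z L N x y HN Hno. unfold cnt. apply zsum_ext. intros t Ht. unfold hterm.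
  destruct (Z.eqb (snd (z t)) (snd (z (S t)))) eqn:E1; simpl; auto.
  destruct (cm N (Z.min (fst (z t)) (fst (z (S t)))) x) eqn:E2; simpl; auto.
  destruct (Z.ltb_spec (snd (z t)) (y+1)); destruct (Z.ltb_spec (snd (z t)) y); auto; try lia.
  exfalso. apply Hno. apply Z.eqb_eq in E1. apply cm_spec in E2; auto. destruct E2 as [m Hm].
  assert (snd (z t) = y) by lia.
  destruct (left_pt z t E1) as [HL|HL].
  - exists t, (-m). split. lia. rewrite HL; simpl. split; lia.
  - exists (S t), (-m). split. lia. rewrite HL; simpl. split; lia. Qed.

Lemma even_small : forall v, v = 0 \/ v = 2 \/ v = -2 -> Z.Even v.
Proof. intros v [H|[H|H]]; [exists 0|exists 1|exists (-1)]; lia. Qed.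

Definition walk (z : nat -> Z*Z) (L : nat) := forall t, (t < L)%nat -> ustep (z t) (z (S t)).

Lemma cnt_horiz : forall z L N x y, N > 0 -> walk z L ->
  fst (z L) = fst (z O) + N -> snd (z L) = snd (z O) ->
  ~ oncyl z L N (x + 1, y) -> Z.Even (cnt z L N x y + cnt z L N (x + 1) y).
Proof.
  intros z L N x y HN Hw HL1 HL2 Hno.
  set (s := fun p : Z*Z => if (cm N (fst p) (x + 1) && Z.ltb (snd p) y)%bool then 1 else 0).
  assert (Hs : s (z L) = s (z O)).
  { unfold s. rewrite HL1, HL2. unfold cm. replace (fst (z O) + N - (x + 1)) with ((fst (z O) - (x + 1)) + 1 * N) by ring.
    rewrite Z.mod_add by lia. reflexivity. }
  assert (Htel := zsum_tel2 (fun t => s (z t)) L). cbv beta in Htel. rewrite Hs in Htel.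
  assert (Hterm : forall t, (t < L)%nat -> Z.Even (s (z t) + s (z (S t)) - hterm z N x y t - hterm z N (x + 1) y t)).
  { intros t Ht. unfold hterm, s. destruct (z t) as [a b] eqn:Ep.
    pose proof (ustep_cases _ _ (Hw t Ht)) as Hc. rewrite Ep in Hc; simpl in Hc.
    destruct Hc as [Hq|[Hq|[Hq|Hq]]]; rewrite Hq; simpl.
    - rewrite Z.eqb_refl. rewrite Z.min_l by lia. rewrite cm_shift.
      destruct (cm N a x); destruct (cm N a (x+1)); destruct (Z.ltb b y); simpl; apply even_small; lia.
    - rewrite Z.eqb_refl. rewrite Z.min_r by lia.
      replace (cm N a (x + 1)) with (cm N (a - 1) x) by (rewrite <- (cm_shift N (a-1) x 1); f_equal; ring).
      destruct (cm N (a-1) x); destruct (cm N (a-1) (x+1)); destruct (Z.ltb b y); simpl; apply even_small; lia.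
    - replace (b =? b + 1) with false by (symmetry; apply Z.eqb_neq; lia). simpl.
      destruct (cm N a (x + 1)) eqn:Ec; simpl; [|apply even_small; lia].
      destruct (Z.ltb_spec b y); destruct (Z.ltb_spec (b+1) y); simpl; try (apply even_small; lia).
      exfalso; apply Hno. apply cm_spec in Ec; auto. destruct Ec as [m Hm].
      exists (S t), (-m). split. lia. rewrite Hq. simpl. split; lia.
    - replace (b =? b - 1) with false by (symmetry; apply Z.eqb_neq; lia). simpl.
      destruct (cm N a (x + 1)) eqn:Ec; simpl; [|apply even_small; lia].
      destruct (Z.ltb_spec b y); destruct (Z.ltb_spec (b-1) y); simpl; try (apply even_small; lia).
      exfalso; apply Hno. apply cm_spec in Ec; auto. destruct Ec as [m Hm].
      exists t, (-m). split. lia. rewrite Ep. simpl. split; lia. }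
  pose proof (zsum_even _ L Hterm) as He.
  replace (zsum (fun t => s (z t) + s (z (S t)) - hterm z N x y t - hterm z N (x + 1) y t) L)
    with (zsum (fun t => s (z t) + s (z (S t))) L + (-1) * zsum (hterm z N x y) L + (-1) * zsum (hterm z N (x+1) y) L) in He.
  2:{ rewrite <- !zsum_scal, <- !zsum_add. apply zsum_ext. intros; ring. }
  rewrite Htel in He. unfold cnt. destruct He as [k Hk]. exists (zsum (fun t => s (z t)) L - k). lia.
Qed.

Definition cntp z L N (p : Z*Z) := cnt z L N (fst p) (snd p).

Lemma even_sub2 : forall a b, Z.Even (a + b) -> Z.Even (a - b).
Proof. intros a b [k Hk]. exists (k - b). lia. Qed.

Lemma cnt_step : forall z L N p p', N > 0 -> walk z L ->
  fst (z L) = fst (z O) + N -> snd (z L) = snd (z O) ->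
  ustep p p' -> ~ oncyl z L N p -> ~ oncyl z L N p' -> Z.Even (cntp z L N p - cntp z L N p').
Proof.
  intros z L N [x y] p' HN Hw H1 H2 Hs Hp Hp'. unfold cntp.
  destruct (ustep_cases _ _ Hs) as [E|[E|[E|E]]]; subst p'; simpl in *.
  - apply even_sub2. apply cnt_horiz; auto.
  - assert (He := cnt_horiz z L N (x - 1) y HN Hw H1 H2). replace (x - 1 + 1) with x in He by ring.
    specialize (He Hp). destruct He as [k Hk]. exists (cnt z L N (x-1) y + k - cnt z L N (x - 1) y - cnt z L N (x-1) y). lia.
  - rewrite cnt_vert; auto. exists 0; lia.
  - assert (He := cnt_vert z L N x (y - 1) HN Hp'). replace (y - 1 + 1) with y in He by ring.
    rewrite He. exists 0; lia.
Qed.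

Lemma cnt_path : forall z L N (w : nat -> Z*Z) K, N > 0 -> walk z L ->
  fst (z L) = fst (z O) + N -> snd (z L) = snd (z O) -> walk w K ->
  (forall m, (m <= K)%nat -> ~ oncyl z L N (w m)) ->
  forall m, (m <= K)%nat -> Z.Even (cntp z L N (w m) - cntp z L N (w O)).
Proof.
  intros z L N w K HN Hw H1 H2 Hw' Hno m. induction m; intros Hm.
  - exists 0; lia.
  - destruct IHm as [k1 Hk1]. lia.
    destruct (cnt_step z L N (w m) (w (S m)) HN Hw H1 H2) as [k2 Hk2].
    apply Hw'; lia. apply Hno; lia. apply Hno; lia.
    exists (k1 - k2). lia.
Qed.

Lemma divstep : forall N u, N > 0 -> (u + 1) / N - u / N = if Z.eqb ((u + 1) mod N) 0 then 1 else 0.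
Proof.
  intros N u HN. pose proof (Z.div_mod u N ltac:(lia)) as Hu. pose proof (Z.mod_pos_bound u N ltac:(lia)) as Hb.
  set (q := u / N) in *. set (r := u mod N) in *.
  destruct (Z.eq_dec (r + 1) N) as [E|E].
  - assert (H1 : (u + 1) / N = q + 1). { symmetry; apply Z.div_unique with 0; lia. }
    assert (H2 : (u + 1) mod N = 0). { symmetry; apply Z.mod_unique with (q + 1); lia. }
    rewrite H1, H2. simpl. lia.
  - assert (H1 : (u + 1) / N = q). { symmetry; apply Z.div_unique with (r + 1); lia. }
    assert (H2 : (u + 1) mod N = r + 1). { symmetry; apply Z.mod_unique with q; lia. }
    rewrite H1, H2. destruct (Z.eqb_spec (r + 1) 0); lia.
Qed.

Definition hind (z : nat -> Z*Z) (N s : Z) (t : nat) : Z :=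
  if (Z.eqb (snd (z t)) (snd (z (S t))) && cm N (Z.min (fst (z t)) (fst (z (S t)))) s)%bool then 1 else 0.

Lemma strip_odd : forall z L N s, N > 0 -> walk z L -> fst (z L) = fst (z O) + N ->
  Z.Odd (zsum (hind z N s) L).
Proof.
  intros z L N s HN Hw H1.
  set (G := fun x => (x - s - 1) / N).
  assert (Hd : forall t, (t < L)%nat -> Z.Even (G (fst (z (S t))) - G (fst (z t)) - hind z N s t)).
  { intros t Ht. unfold hind, G. destruct (z t) as [a b] eqn:Ep.
    pose proof (ustep_cases _ _ (Hw t Ht)) as Hc. rewrite Ep in Hc; simpl in Hc.
    destruct Hc as [Hq|[Hq|[Hq|Hq]]]; rewrite Hq; simpl.
    - rewrite Z.eqb_refl, Z.min_l by lia. simpl.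
      replace (a + 1 - s - 1) with ((a - s - 1) + 1) by ring. rewrite divstep by lia.
      unfold cm. replace (a - s - 1 + 1) with (a - s) by ring.
      destruct (Z.eqb ((a - s) mod N) 0); apply even_small; lia.
    - rewrite Z.eqb_refl, Z.min_r by lia. simpl.
      pose proof (divstep N (a - s - 1 - 1) HN) as Hds.
      replace (a - s - 1 - 1 + 1) with (a - s - 1) in Hds by ring.
      unfold cm. replace (a - 1 - s) with (a - s - 1) by ring. revert Hds.
      destruct (Z.eqb ((a - s - 1) mod N) 0); intros; apply even_small; lia.
    - replace (b =? b + 1) with false by (symmetry; apply Z.eqb_neq; lia). simpl. apply even_small; lia.
    - replace (b =? b - 1) with false by (symmetry; apply Z.eqb_neq; lia). simpl. apply even_small; lia. }
  pose proof (zsum_even _ L Hd) as He.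
  pose proof (zsum_tel (fun t => G (fst (z t))) L) as Ht. cbv beta in Ht.
  assert (HG : G (fst (z L)) - G (fst (z O)) = 1).
  { unfold G. rewrite H1. replace (fst (z O) + N - s - 1) with ((fst (z O) - s - 1) + 1 * N) by ring.
    rewrite Z.div_add by lia. ring. }
  replace (zsum (fun t => G (fst (z (S t))) - G (fst (z t)) - hind z N s t) L)
    with (zsum (fun t => G (fst (z (S t))) - G (fst (z t))) L + (-1) * zsum (hind z N s) L) in He.
  2:{ rewrite <- zsum_scal, <- zsum_add. apply zsum_ext. intros; ring. }
  rewrite Ht, HG in He. destruct He as [k Hk]. exists (-k). lia.
Qed.

Lemma zsum_nz : forall f L, zsum f L <> 0 -> exists t, (t < L)%nat /\ f t <> 0.
Proof. intros f L; induction L; cbn [zsum]; intros H. lia.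
  destruct (Z.eq_dec (f L) 0). destruct IHL as [t [? ?]]. lia. exists t; split; auto.
  exists L; split; auto. Qed.

Lemma argmin : forall (P : nat -> bool) (h : nat -> Z) L, (exists t, (t < L)%nat /\ P t = true) ->
  exists t0, (t0 < L)%nat /\ P t0 = true /\ forall t, (t < L)%nat -> P t = true -> h t0 <= h t.
Proof. intros P h L; induction L; intros [t [Ht HP]]. lia.
  destruct (classic (exists t, (t < L)%nat /\ P t = true)) as [Hex|Hnex].
  - destruct (IHL Hex) as [t0 [H1 [H2 H3]]].
    destruct (P L) eqn:EL.
    + destruct (Z.le_ge_cases (h t0) (h L)).
      * exists t0. repeat split; auto. intros t' Ht' Hp'. destruct (Nat.eq_dec t' L). subst; auto. apply H3; auto; lia.
      * exists L. repeat split; auto. intros t' Ht' Hp'. destruct (Nat.eq_dec t' L). subst; lia.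
        assert (h t0 <= h t') by (apply H3; auto; lia). lia.
    + exists t0. repeat split; auto. intros t' Ht' Hp'. destruct (Nat.eq_dec t' L). subst; congruence. apply H3; auto; lia.
  - exists L. assert (t = L). { destruct (Nat.eq_dec t L); auto. exfalso; apply Hnex; exists t; split; auto; lia. }
    subst. repeat split; auto. intros t' Ht' Hp'. destruct (Nat.eq_dec t' L). subst; lia.
    exfalso; apply Hnex; exists t'; split; auto; lia. Qed.

Lemma walk_shift : forall z L c, walk z L -> walk (fun t => (fst (z t) + c, snd (z t))) L.
Proof. unfold walk, ustep; simpl; intros z L c H t Ht. specialize (H t Ht).
  replace (fst (z (S t)) + c - (fst (z t) + c)) with (fst (z (S t)) - fst (z t)) by ring. auto. Qed.

Lemma hterm_ind : forall z N x y t, hterm z N x y t = hind z N x t * (if Z.ltb (snd (z t)) y then 1 else 0).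
Proof. intros. unfold hterm, hind. destruct (snd (z t) =? snd (z (S t))); destruct (cm N _ x); destruct (snd (z t) <? y); reflexivity. Qed.

Lemma hind_01 : forall z N x t, hind z N x t = 0 \/ hind z N x t = 1.
Proof. intros; unfold hind. destruct (_ && _)%bool; auto. Qed.

Lemma hind_1 : forall z N x t, N > 0 -> hind z N x t = 1 ->
  snd (z t) = snd (z (S t)) /\ exists m, Z.min (fst (z t)) (fst (z (S t))) = x + m * N.
Proof. intros z N x t HN; unfold hind. destruct (snd (z t) =? snd (z (S t))) eqn:E1; destruct (cm N _ x) eqn:E2; simpl; try lia.
  intros _. split. apply Z.eqb_eq; auto. apply cm_spec; auto. Qed.

Lemma left_idx : forall (z : nat -> Z*Z) t, snd (z t) = snd (z (S t)) -> exists t', (t' = t \/ t' = S t) /\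
   z t' = (Z.min (fst (z t)) (fst (z (S t))), snd (z t)).
Proof. intros z t H. destruct (left_pt z t H) as [E|E]; [exists t|exists (S t)]; auto. Qed.

Lemma odd_mul : forall a b, Z.Odd a -> Z.Odd b -> Z.Odd (a * b).
Proof. intros a b [k Hk] [l Hl]. exists (2*k*l + k + l). subst. ring. Qed.

Lemma cyl_contra : forall z L N D, N > 0 -> walk z L ->
  fst (z L) = fst (z O) + N -> snd (z L) = snd (z O) ->
  (forall t u m, (t <= L)%nat -> (u <= L)%nat -> ~ (fst (z t) + m * N = fst (z u) + D /\ snd (z t) = snd (z u))) ->
  False.
Proof.
  intros z L N D HN Hw H1 H2 Hdis.
  set (wB := fun t => (fst (z t) + D, snd (z t))).
  set (wC := fun t => (fst (z t) + (- D), snd (z t))).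
  assert (NoB : forall u, (u <= L)%nat -> ~ oncyl z L N (wB u)).
  { intros u Hu [t [m [Ht [E1 E2]]]]. unfold wB in *; simpl in *. apply (Hdis t u m); auto; split; lia. }
  assert (NoC : forall u, (u <= L)%nat -> ~ oncyl z L N (wC u)).
  { intros u Hu [t [m [Ht [E1 E2]]]]. unfold wC in *; simpl in *. apply (Hdis u t (-m)); auto; split; lia. }
  assert (HwB : walk wB L) by (apply walk_shift; auto).
  assert (HwC : walk wC L) by (apply walk_shift; auto).
  assert (Hex : exists t, (t < L)%nat /\ Z.eqb (snd (z t)) (snd (z (S t))) = true).
  { destruct (strip_odd z L N 0 HN Hw H1) as [k Hk].
    destruct (zsum_nz (hind z N 0) L) as [t [Ht Hnz]]. lia.
    exists t; split; auto. unfold hind in Hnz. destruct (snd (z t) =? snd (z (S t))); auto. }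
  destruct (argmin (fun t => Z.eqb (snd (z t)) (snd (z (S t)))) (fun t => snd (z t)) L Hex) as [t0 [Ht0 [Hh0 Hmin]]].
  apply Z.eqb_eq in Hh0.
  set (a := Z.min (fst (z t0)) (fst (z (S t0)))). set (mh := snd (z t0)).
  destruct (left_idx z t0 Hh0) as [u0 [Hu0 Ez]]. fold a in Ez. fold mh in Ez.
  assert (Hu0L : (u0 <= L)%nat) by lia.
  assert (Hzero : forall x, cnt z L N x mh = 0).
  { intros x. unfold cnt. transitivity (zsum (fun _ => 0) L); [|apply zsum_zero]. apply zsum_ext.
    intros t Ht. unfold hterm. destruct (snd (z t) =? snd (z (S t))) eqn:E; simpl; auto.
    destruct (cm N _ x); simpl; auto. destruct (Z.ltb_spec (snd (z t)) mh); auto.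
    assert (mh <= snd (z t)) by (apply Hmin; auto). lia. }
  assert (EvB : forall u, (u <= L)%nat -> Z.Even (cntp z L N (wB u))).
  { intros u Hu. destruct (cnt_path z L N wB L HN Hw H1 H2 HwB NoB u Hu) as [k1 Hk1].
    destruct (cnt_path z L N wB L HN Hw H1 H2 HwB NoB u0 Hu0L) as [k2 Hk2].
    assert (cntp z L N (wB u0) = 0). { unfold cntp, wB. rewrite Ez. simpl. apply Hzero. }
    exists (k1 - k2). lia. }
  assert (EvC : forall u, (u <= L)%nat -> Z.Even (cntp z L N (wC u))).
  { intros u Hu. destruct (cnt_path z L N wC L HN Hw H1 H2 HwC NoC u Hu) as [k1 Hk1].
    destruct (cnt_path z L N wC L HN Hw H1 H2 HwC NoC u0 Hu0L) as [k2 Hk2].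
    assert (cntp z L N (wC u0) = 0). { unfold cntp, wC. rewrite Ez. simpl. apply Hzero. }
    exists (k1 - k2). lia. }
  set (fC := hind z N a). set (fB := hind z N (a - D)).
  set (lt := fun p q : Z => if Z.ltb p q then 1 else 0).
  assert (HcntE : forall x y, cnt z L N x y = zsum (fun t => hind z N x t * lt (snd (z t)) y) L).
  { intros. unfold cnt. apply zsum_ext. intros. apply hterm_ind. }
  set (X := zsum (fun u => fB u * cnt z L N a (snd (z u))) L + zsum (fun t => fC t * cnt z L N (a - D) (snd (z t))) L).
  assert (HXe : Z.Even X).
  { destruct (zsum_even (fun u => fB u * cnt z L N a (snd (z u))) L) as [k1 Hk1].
    { intros u Hu. destruct (hind_01 z N (a - D) u) as [E|E]; unfold fB; rewrite E. exists 0; lia.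
      destruct (hind_1 z N (a - D) u HN E) as [Hh [m Hm]].
      destruct (left_idx z u Hh) as [u' [Hu' Ez']].
      assert (Hc : cnt z L N a (snd (z u)) = cntp z L N (wB u')).
      { unfold cntp, wB. rewrite Ez'. simpl. apply cnt_mod; auto. apply cm_spec; auto. exists (-m). lia. }
      rewrite Hc. replace (1 * cntp z L N (wB u')) with (cntp z L N (wB u')) by ring. apply EvB. lia. }
    destruct (zsum_even (fun t => fC t * cnt z L N (a - D) (snd (z t))) L) as [k2 Hk2].
    { intros u Hu. destruct (hind_01 z N a u) as [E|E]; unfold fC; rewrite E. exists 0; lia.
      destruct (hind_1 z N a u HN E) as [Hh [m Hm]].
      destruct (left_idx z u Hh) as [u' [Hu' Ez']].
      assert (Hc : cnt z L N (a - D) (snd (z u)) = cntp z L N (wC u')).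
      { unfold cntp, wC. rewrite Ez'. simpl. apply cnt_mod; auto. apply cm_spec; auto. exists (-m). lia. }
      rewrite Hc. replace (1 * cntp z L N (wC u')) with (cntp z L N (wC u')) by ring. apply EvC. lia. }
    exists (k1 + k2). unfold X. lia. }
  assert (HXp : X = zsum fB L * zsum fC L).
  { unfold X.
    transitivity (zsum (fun u => fB u * zsum (fun t => fC t * lt (snd (z t)) (snd (z u))) L) L
        + zsum (fun t => fC t * zsum (fun u => fB u * lt (snd (z u)) (snd (z t))) L) L).
    { f_equal; apply zsum_ext; intros; rewrite HcntE; reflexivity. }
    transitivity (zsum (fun u => zsum (fun t => fB u * fC t * (lt (snd (z t)) (snd (z u)) + lt (snd (z u)) (snd (z t)))) L) L).
    - set (h := fun t => snd (z t)).
      assert (HA : zsum (fun u => fB u * zsum (fun t => fC t * lt (snd (z t)) (snd (z u))) L) L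
                 = zsum (fun u => zsum (fun t => fB u * fC t * lt (h t) (h u)) L) L).
      { apply zsum_ext; intros; rewrite <- zsum_scal; apply zsum_ext; intros; unfold h; ring. }
      assert (HB : zsum (fun t => fC t * zsum (fun u => fB u * lt (snd (z u)) (snd (z t))) L) L
                 = zsum (fun u => zsum (fun t => fB u * fC t * lt (h u) (h t)) L) L).
      { transitivity (zsum (fun t => zsum (fun u => fB u * fC t * lt (h u) (h t)) L) L).
        apply zsum_ext; intros; rewrite <- zsum_scal; apply zsum_ext; intros; unfold h; ring.
        apply (zsum_swap (fun t u => fB u * fC t * lt (h u) (h t))). }
      rewrite HA, HB, <- zsum_add. apply zsum_ext. intros u Hu. rewrite <- zsum_add. apply zsum_ext. intros t Ht.
      unfold h. ring.
    - transitivity (zsum (fun u => fB u * zsum fC L) L).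
      + apply zsum_ext. intros u Hu. rewrite <- zsum_scal. apply zsum_ext. intros t Ht.
        destruct (hind_01 z N (a - D) u) as [E|E]; unfold fB; rewrite E; [ring|].
        destruct (hind_01 z N a t) as [E'|E']; unfold fC; rewrite E'; [ring|].
        assert (snd (z t) <> snd (z u)).
        { intros Heq. destruct (hind_1 z N (a - D) u HN E) as [Hh [m Hm]].
          destruct (hind_1 z N a t HN E') as [Hh' [m' Hm']].
          destruct (left_idx z u Hh) as [u' [Hu' Ez']]. destruct (left_idx z t Hh') as [t' [Ht' Ezt]].
          apply (Hdis t' u' (m - m')). lia. lia. rewrite Ez', Ezt. simpl. split; lia. }
        unfold lt. destruct (Z.ltb_spec (snd (z t)) (snd (z u))); destruct (Z.ltb_spec (snd (z u)) (snd (z t))); lia.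
      + rewrite <- (Z.mul_comm (zsum fC L)). rewrite <- zsum_scal. apply zsum_ext. intros; ring. }
  assert (Hodd : Z.Odd X).
  { rewrite HXp. apply odd_mul; apply strip_odd; auto. }
  destruct HXe as [k1 Hk1]. destruct Hodd as [k2 Hk2]. lia.
Qed.

Definition chord (z : nat -> Z*Z) (L : nat) (D : Z) :=
  exists t u, (t <= L)%nat /\ (u <= L)%nat /\ fst (z t) - fst (z u) = D /\ snd (z t) = snd (z u).

Lemma sub_chord : forall z L D a b,
  walk z L -> (a <= L)%nat -> (b <= L)%nat ->
  (forall z' L', walk z' L' -> (L' = Nat.max a b - Nat.min a b)%nat ->
      fst (z' L') - fst (z' O) = fst (z b) - fst (z a) -> snd (z' L') = snd (z' O) -> chord z' L' D) ->
  snd (z b) = snd (z a) -> chord z L D.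
Proof.
  intros z L D a b Hw Ha Hb IH Hs.
  destruct (Nat.le_ge_cases a b) as [Hab|Hab].
  - destruct (IH (fun k => z (a + k)%nat) (b - a)%nat) as [t [u [Ht [Hu [E1 E2]]]]].
    + intros k Hk. replace (a + S k)%nat with (S (a + k)) by lia. apply Hw. lia.
    + lia.
    + replace (a + (b - a))%nat with b by lia. replace (a + 0)%nat with a by lia. reflexivity.
    + replace (a + (b - a))%nat with b by lia. replace (a + 0)%nat with a by lia. auto.
    + exists (a + t)%nat, (a + u)%nat. repeat split; auto; lia.
  - destruct (IH (fun k => z (a - k)%nat) (a - b)%nat) as [t [u [Ht [Hu [E1 E2]]]]].
    + intros k Hk. replace (a - k)%nat with (S (a - S k)) by lia. apply ustep_sym. apply Hw. lia.
    + lia.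
    + replace (a - (a - b))%nat with b by lia. replace (a - 0)%nat with a by lia. reflexivity.
    + replace (a - (a - b))%nat with b by lia. replace (a - 0)%nat with a by lia. auto.
    + exists (a - t)%nat, (a - u)%nat. repeat split; auto; lia.
Qed.

Lemma jfalse : forall j x, 2 <= j -> j * x = 1 -> False.
Proof. intros j x Hj H. destruct (Z.lt_trichotomy x 0) as [?|[?|?]]; nia. Qed.

Lemma cancelD : forall a b D, 0 < D -> a * D = b * D -> a = b.
Proof. intros a b D HD H. apply Z.mul_cancel_r with D; lia. Qed.

Lemma UC : forall L z D j, 0 < D -> 1 <= j -> walk z L ->
  fst (z L) = fst (z O) + j * D -> snd (z L) = snd (z O) -> chord z L D.
Proof.
  intros L. induction L as [L IHL] using (well_founded_induction lt_wf).
  intros z D j HD Hj Hw H1 H2.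
  destruct (classic (chord z L D)) as [Hc|Hnc]; auto. exfalso.
  destruct (Z.eq_dec j 1) as [Ej|Ej].
  { apply Hnc. exists L, O. repeat split; lia. }
  (* any pair differing by a nonzero multiple of D, other than endpoints, yields a chord *)
  assert (Hsub : forall a b c, (a <= L)%nat -> (b <= L)%nat -> 1 <= c ->
            (Nat.max a b - Nat.min a b < L)%nat ->
            fst (z b) - fst (z a) = c * D -> snd (z b) = snd (z a) -> False).
  { intros a b c Ha Hb Hc Hlt E1 E2. apply Hnc. apply (sub_chord z L D a b Hw Ha Hb); auto.
    intros z' L' Hw' HL' E3 E4. apply (IHL L' ltac:(lia) z' D c HD Hc Hw'); lia. }
  apply (cyl_contra z L (j * D) D ltac:(nia) Hw H1 H2).
  intros t u m Ht Hu [E1 E2].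
  (* fst z u - fst z t = (m j - 1) D *)
  destruct (Z.lt_trichotomy (m * j - 1) 0) as [Hc|[Hc|Hc]].
  -
    destruct (Nat.eq_dec (Nat.max u t - Nat.min u t) L) as [EL|EL].
    + assert ((u = O /\ t = L) \/ (u = L /\ t = O))%nat as [[-> ->]|[-> ->]] by lia.
      * apply (jfalse j (1 + m)); [lia|]. apply (cancelD _ _ D HD). lia.
      * apply (jfalse j (m - 1)); [lia|]. apply (cancelD _ _ D HD). lia.
    + apply (Hsub u t (1 - m * j)); auto; try lia.
  - apply (jfalse j m); lia.
  - destruct (Nat.eq_dec (Nat.max t u - Nat.min t u) L) as [EL|EL].
    + assert ((t = O /\ u = L) \/ (t = L /\ u = O))%nat as [[-> ->]|[-> ->]] by lia.
      * apply (jfalse j (m - 1)); [lia|]. apply (cancelD _ _ D HD). lia.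
      * apply (jfalse j (1 + m)); [lia|]. apply (cancelD _ _ D HD). lia.
    + apply (Hsub t u (m * j - 1)); auto; try lia.
Qed.

Lemma kbound : forall k x c, 0 < k -> k * c < k * x -> c < x.
Proof. intros. nia. Qed.

Lemma core_round : forall k n d Fx Fy Gx Gy (ux uy ux' uy' i i' : Z),
  1 <= k -> 0 <= i < k -> 0 <= i' < k ->
  ((ux = 1 /\ uy = 0) \/ (ux = 0 /\ uy = 1)) -> ((ux' = 1 /\ uy' = 0) \/ (ux' = 0 /\ uy' = 1)) ->
  k * (d - 1) < n < k * (d + 1) ->
  (k * Fx + i * ux) - (k * Gx + i' * ux') = n -> k * Fy + i * uy = k * Gy + i' * uy' ->
  exists a b, (a = 0 \/ (0 < i /\ a = 1)) /\ (b = 0 \/ (0 < i' /\ b = 1)) /\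
     (Fx + a * ux) - (Gx + b * ux') = d /\ Fy + a * uy = Gy + b * uy'.
Proof.
  intros k n d Fx Fy Gx Gy ux uy ux' uy' i i' Hk Hi Hi' Hu Hu' Hn E1 E2.
  destruct Hu as [[-> ->]|[-> ->]]; destruct Hu' as [[-> ->]|[-> ->]].
  -
    assert (Fy = Gy) by nia.
    assert (Hlo : d - 1 <= Fx - Gx). { assert (k * (d - 2) < k * (Fx - Gx)) by nia. assert (d - 2 < Fx - Gx) by (eapply kbound; eauto; lia). lia. }
    assert (Hhi : Fx - Gx <= d + 1). { assert (k * (Fx - Gx) < k * (d + 2)) by nia. assert (Fx - Gx < d + 2) by (eapply kbound; eauto; lia). lia. }
    destruct (Z.eq_dec (Fx - Gx) d).
    + exists 0, 0. repeat split; auto; lia.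
    + destruct (Z.eq_dec (Fx - Gx) (d - 1)).
      * assert (0 < i) by nia. exists 1, 0. repeat split; auto; lia.
      * assert (0 < i') by nia. exists 0, 1. repeat split; auto; lia.
  -
    assert (i' = 0). { assert (k * (Fy - Gy) = i') by lia. destruct (Z.lt_trichotomy (Fy - Gy) 0) as [?|[?|?]]; nia. }
    subst i'. assert (Fy = Gy) by nia.
    assert (Hlo : d - 1 <= Fx - Gx). { assert (k * (d - 2) < k * (Fx - Gx)) by nia. assert (d - 2 < Fx - Gx) by (eapply kbound; eauto; lia). lia. }
    assert (Hhi : Fx - Gx <= d). { assert (k * (Fx - Gx) < k * (d + 1)) by nia. assert (Fx - Gx < d + 1) by (eapply kbound; eauto; lia). lia. }
    destruct (Z.eq_dec (Fx - Gx) d).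
    + exists 0, 0. repeat split; auto; lia.
    + assert (0 < i) by nia. exists 1, 0. repeat split; auto; lia.
  -
    assert (i = 0). { assert (k * (Gy - Fy) = i) by lia. destruct (Z.lt_trichotomy (Gy - Fy) 0) as [?|[?|?]]; nia. }
    subst i. assert (Fy = Gy) by nia.
    assert (Hlo : d <= Fx - Gx). { assert (k * (d - 1) < k * (Fx - Gx)) by nia. assert (d - 1 < Fx - Gx) by (eapply kbound; eauto; lia). lia. }
    assert (Hhi : Fx - Gx <= d + 1). { assert (k * (Fx - Gx) < k * (d + 2)) by nia. assert (Fx - Gx < d + 2) by (eapply kbound; eauto; lia). lia. }
    destruct (Z.eq_dec (Fx - Gx) d).
    + exists 0, 0. repeat split; auto; lia.
    + assert (0 < i') by nia. exists 0, 1. repeat split; auto; lia.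
  -
    assert (Fy = Gy). { assert (k * (Fy - Gy) = i' - i) by lia. destruct (Z.lt_trichotomy (Fy - Gy) 0) as [?|[?|?]]; nia. }
    assert (Hlo : d <= Fx - Gx). { assert (k * (d - 1) < k * (Fx - Gx)) by nia. assert (d - 1 < Fx - Gx) by (eapply kbound; eauto; lia). lia. }
    assert (Hhi : Fx - Gx <= d). { assert (k * (Fx - Gx) < k * (d + 1)) by nia. assert (Fx - Gx < d + 1) by (eapply kbound; eauto; lia). lia. }
    exists 0, 0. repeat split; auto; lia.
Qed.

Lemma canon : forall k j (P0 P1 : Z*Z), 1 <= k -> 0 <= j < k -> (0 < j -> ustep P0 P1) ->
  exists Fx Fy ux uy i, ((ux = 1 /\ uy = 0) \/ (ux = 0 /\ uy = 1)) /\ 0 <= i < k /\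
    k * fst P0 + j * (fst P1 - fst P0) = k * Fx + i * ux /\
    k * snd P0 + j * (snd P1 - snd P0) = k * Fy + i * uy /\
    ((Fx, Fy) = P0 \/ (0 < j /\ (Fx, Fy) = P1)) /\
    (0 < i -> ((Fx + ux, Fy + uy) = P0 \/ (0 < j /\ (Fx + ux, Fy + uy) = P1))).
Proof.
  intros k j [a b] P1 Hk Hj Hs. simpl.
  destruct (Z.eq_dec j 0) as [->|Hj0].
  - exists a, b, 1, 0, 0. repeat split; try lia. left; auto.
  - assert (Hs' := ustep_cases _ _ (Hs ltac:(lia))). simpl in Hs'.
    destruct Hs' as [ -> | [ -> | [ -> | -> ]]]; simpl.
    + exists a, b, 1, 0, j. repeat split; try lia. left; auto. intros. right. split. lia. f_equal; ring.
    + exists (a - 1), b, 1, 0, (k - j). repeat split; try lia. right. split; [lia|reflexivity].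
      intros. left. f_equal; ring.
    + exists a, b, 0, 1, j. repeat split; try lia. left; auto. intros. right. split. lia. f_equal; ring.
    + exists a, (b - 1), 0, 1, (k - j). repeat split; try lia. right. split; [lia|reflexivity].
      intros. left. f_equal; ring.
Qed.

Lemma round : forall (k n d : Z) (P0 P1 Q0 Q1 : Z*Z) (j j' : Z), 1 <= k -> 0 <= j < k -> 0 <= j' < k ->
  (0 < j -> ustep P0 P1) -> (0 < j' -> ustep Q0 Q1) -> k * (d - 1) < n < k * (d + 1) ->
  (k * fst P0 + j * (fst P1 - fst P0)) - (k * fst Q0 + j' * (fst Q1 - fst Q0)) = n ->
  k * snd P0 + j * (snd P1 - snd P0) = k * snd Q0 + j' * (snd Q1 - snd Q0) ->
  exists A B, (A = P0 \/ (0 < j /\ A = P1)) /\ (B = Q0 \/ (0 < j' /\ B = Q1)) /\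
    fst A - fst B = d /\ snd A = snd B.
Proof.
  intros k n d P0 P1 Q0 Q1 j j' Hk Hj Hj' HP HQ Hn E1 E2.
  destruct (canon k j P0 P1 Hk Hj HP) as [Fx [Fy [ux [uy [i [Hu [Hi [X1 [X2 [HF HFu]]]]]]]]]].
  destruct (canon k j' Q0 Q1 Hk Hj' HQ) as [Gx [Gy [ux' [uy' [i' [Hu' [Hi' [Y1 [Y2 [HG HGu]]]]]]]]]].
  rewrite X1, Y1 in E1. rewrite X2, Y2 in E2.
  destruct (core_round k n d Fx Fy Gx Gy ux uy ux' uy' i i' Hk Hi Hi' Hu Hu' Hn E1 E2)
    as [a [b [Ha [Hb [R1 R2]]]]].
  exists (Fx + a * ux, Fy + a * uy), (Gx + b * ux', Gy + b * uy'). simpl. split; [|split; [|split]]; auto.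
  - destruct Ha as [->|[Hi0 ->]].
    + replace (Fx + 0 * ux, Fy + 0 * uy) with (Fx, Fy) by (f_equal; ring). auto.
    + replace (Fx + 1 * ux, Fy + 1 * uy) with (Fx + ux, Fy + uy) by (f_equal; ring). auto.
  - destruct Hb as [->|[Hi0 ->]].
    + replace (Gx + 0 * ux', Gy + 0 * uy') with (Gx, Gy) by (f_equal; ring). auto.
    + replace (Gx + 1 * ux', Gy + 1 * uy') with (Gx + ux', Gy + uy') by (f_equal; ring). auto.
Qed.

Lemma choose_k : forall n d : Z, 1 <= n -> 1 <= d -> d * d <= 2 * n ->
  exists k, 1 <= k /\ k * (d - 1) < n < k * (d + 1).
Proof.
  intros n d Hn Hd Hdd.
  pose proof (Z.div_mod n d ltac:(lia)) as Hqr. pose proof (Z.mod_pos_bound n d ltac:(lia)) as Hb.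
  set (q := n / d) in *. set (r := n mod d) in *.
  assert (0 <= q) by nia.
  destruct (Z.lt_ge_cases r q).
  - exists q. split; [lia|]. split; nia.
  - destruct (Z.le_gt_cases (d - r) q).
    + exists (q + 1). split; [lia|]. split; nia.
    + exfalso. set (e := d - q - 1). assert (d = e + q + 1) by lia. assert (q <= e) by lia.
      assert (e * e >= q * q) by nia. nia.
Qed.

Definition Vf (f : nat -> Z*Z) (kn : nat) (m : nat) : Z*Z :=
  (Z.of_nat kn * fst (f (m / kn)%nat) + Z.of_nat (m mod kn) * (fst (f (S (m / kn))) - fst (f (m / kn)%nat)),
   Z.of_nat kn * snd (f (m / kn)%nat) + Z.of_nat (m mod kn) * (snd (f (S (m / kn))) - snd (f (m / kn)%nat))).

Lemma Vf_walk : forall f L' kn, (1 <= kn)%nat -> walk f L' -> walk (Vf f kn) (kn * L').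
Proof.
  intros f L' kn Hk Hw m Hm.
  pose proof (Nat.div_mod_eq m kn) as Hdm. pose proof (Nat.mod_upper_bound m kn ltac:(lia)) as Hb.
  set (i := (m / kn)%nat) in *. set (j := (m mod kn)%nat) in *.
  assert (Hi : (i < L')%nat) by nia.
  pose proof (Hw i Hi) as Hs. unfold ustep in *.
  unfold Vf. fold i j.
  destruct (Nat.eq_dec (S j) kn) as [E|E].
  - assert (E1 : (S m / kn = S i)%nat). { symmetry. apply (Nat.div_unique _ _ _ 0); lia. }
    assert (E2 : (S m mod kn = 0)%nat). { symmetry. apply (Nat.mod_unique _ _ (S i)); lia. }
    rewrite E1, E2. cbn [fst snd].
    assert (Hj : Z.of_nat j = Z.of_nat kn - 1) by lia. rewrite Hj.
    match goal with |- Z.abs ?a + Z.abs ?b = 1 =>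
      replace a with (fst (f (S i)) - fst (f i)) by ring; replace b with (snd (f (S i)) - snd (f i)) by ring end.
    exact Hs.
  - assert (E1 : (S m / kn = i)%nat). { symmetry. apply (Nat.div_unique _ _ _ (S j)); lia. }
    assert (E2 : (S m mod kn = S j)%nat). { symmetry. apply (Nat.mod_unique _ _ i); lia. }
    rewrite E1, E2. cbn [fst snd]. rewrite Nat2Z.inj_succ.
    match goal with |- Z.abs ?a + Z.abs ?b = 1 =>
      replace a with (fst (f (S i)) - fst (f i)) by ring; replace b with (snd (f (S i)) - snd (f i)) by ring end.
    exact Hs.
Qed.

Lemma Vf_end : forall f L' kn, (1 <= kn)%nat -> Vf f kn (kn * L') = (Z.of_nat kn * fst (f L'), Z.of_nat kn * snd (f L')).
Proof. intros. unfold Vf.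
  assert (E1 : (kn * L' / kn)%nat = L') by (symmetry; apply (Nat.div_unique _ _ _ 0); lia).
  assert (E2 : (kn * L' mod kn)%nat = O) by (symmetry; apply (Nat.mod_unique _ _ L'); lia).
  rewrite E1, E2. simpl. f_equal; ring. Qed.

Lemma Vf_0 : forall f kn, (1 <= kn)%nat -> Vf f kn 0 = (Z.of_nat kn * fst (f O), Z.of_nat kn * snd (f O)).
Proof. intros. unfold Vf. rewrite Nat.div_0_l, Nat.mod_0_l by lia. simpl. f_equal; ring. Qed.

(* chord d in f from chord n in the refined walk *)
Lemma refine_chord : forall f L' (kn : nat) (n d : Z), (1 <= kn)%nat -> walk f L' ->
  fst (f L') - fst (f O) = n -> snd (f L') = snd (f O) -> 0 < n ->
  Z.of_nat kn * (d - 1) < n < Z.of_nat kn * (d + 1) ->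
  exists a b, (a <= L')%nat /\ (b <= L')%nat /\ fst (f a) - fst (f b) = d /\ snd (f a) = snd (f b).
Proof.
  intros f L' kn n d Hk Hw E1 E2 Hn Hkd.
  assert (HV := Vf_walk f L' kn Hk Hw).
  destruct (UC (kn * L') (Vf f kn) n (Z.of_nat kn) Hn ltac:(lia) HV) as [t [u [Ht [Hu [C1 C2]]]]].
  { rewrite Vf_end, Vf_0 by auto. simpl. nia. }
  { rewrite Vf_end, Vf_0 by auto. simpl. rewrite E2. ring. }
  pose proof (Nat.div_mod_eq t kn) as Hdt. pose proof (Nat.mod_upper_bound t kn ltac:(lia)) as Hbt.
  pose proof (Nat.div_mod_eq u kn) as Hdu. pose proof (Nat.mod_upper_bound u kn ltac:(lia)) as Hbu.
  set (i := (t / kn)%nat) in *. set (j := (t mod kn)%nat) in *.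
  set (i' := (u / kn)%nat) in *. set (j' := (u mod kn)%nat) in *.
  assert (Hi : (i <= L')%nat) by nia. assert (Hi' : (i' <= L')%nat) by nia.
  assert (Hij : (0 < j -> i < L')%nat) by (intros; nia).
  assert (Hij' : (0 < j' -> i' < L')%nat) by (intros; nia).
  unfold Vf in C1, C2. fold i j i' j' in C1, C2. simpl in C1, C2.
  destruct (round (Z.of_nat kn) n d (f i) (f (S i)) (f i') (f (S i')) (Z.of_nat j) (Z.of_nat j'))
    as [Aa [Bb [HA [HB [R1 R2]]]]]; try lia.
  { intros. apply Hw. lia. }
  { intros. apply Hw. lia. }
  destruct HA as [HA|[HA0 HA]]; destruct HB as [HB|[HB0 HB]]; subst Aa Bb.
  - exists i, i'. repeat split; auto.
  - exists i, (S i'). repeat split; auto. lia.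
  - exists (S i), i'. repeat split; auto. lia.
  - exists (S i), (S i'). repeat split; auto; lia.
Qed.

Lemma gn_ustep : forall p q, gnorm2 (gsub q p) = 1 -> ustep p q.
Proof. intros [a b] [c e]. unfold gnorm2, gsub, ustep. simpl. intros H.
  set (x := c - a) in *. set (y := e - b) in *.
  assert (Hx : -1 <= x <= 1) by nia. assert (Hy : -1 <= y <= 1) by nia.
  assert (x = -1 \/ x = 0 \/ x = 1) as Hx' by lia. assert (y = -1 \/ y = 0 \/ y = 1) as Hy' by lia.
  destruct Hx' as [ -> | [ -> | -> ]]; destruct Hy' as [ -> | [ -> | -> ]]; simpl in *; lia. Qed.

Lemma orient : forall (z : nat -> Z*Z) Len r s, (r < Len)%nat -> (s < Len)%nat ->
  (forall j, (S j < Len)%nat -> ustep (z j) (z (S j))) ->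
  exists f L', walk f L' /\ f O = z s /\ f L' = z r /\
    forall k, (k <= L')%nat -> exists idx, (idx < Len)%nat /\ f k = z idx.
Proof.
  intros z Len r s Hr Hs Hst.
  destruct (Nat.le_ge_cases s r) as [Hsr|Hsr].
  - exists (fun k => z (s + k)%nat), (r - s)%nat. split; [|split; [|split]].
    + intros k Hk. replace (s + S k)%nat with (S (s + k)) by lia. apply Hst. lia.
    + f_equal; lia.
    + f_equal; lia.
    + intros k Hk. exists (s + k)%nat. split; auto; lia.
  - exists (fun k => z (s - k)%nat), (s - r)%nat. split; [|split; [|split]].
    + intros k Hk. replace (s - k)%nat with (S (s - S k)) by lia. apply ustep_sym. apply Hst. lia.
    + f_equal; lia.
    + f_equal; lia.
    + intros k Hk. exists (s - k)%nat. split; auto; lia.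
Qed.

Theorem mainTheorem4 (n d : nat) :
  (0 < n)%nat -> (0 < d)%nat -> (d * d <= 2 * n)%nat -> A n d.
Proof.
  intros Hn Hd Hdd. split; [exact Hd|].
  intros [w [[Hne Hw] [[r [s [Hr [Hs Hrs]]]] Hav]]].
  set (z := fun m => gat w m).
  assert (Hst : forall j, (S j < length w)%nat -> ustep (z j) (z (S j))).
  { intros j Hj. apply gn_ustep. apply Hw. auto. }
  destruct (orient z (length w) r s Hr Hs Hst) as [f [L' [Hwf [Ef0 [EfL Hidx]]]]].
  unfold gsub, gnat in Hrs. injection Hrs as H1 H2.
  destruct (choose_k (Z.of_nat n) (Z.of_nat d)) as [k [Hk Hkd]]; try lia.
  set (kn := Z.to_nat k).
  assert (Hkn : Z.of_nat kn = k) by (unfold kn; lia).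
  destruct (refine_chord f L' kn (Z.of_nat n) (Z.of_nat d)) as [a [b [Ha [Hb [C1 C2]]]]].
  - lia.
  - exact Hwf.
  - rewrite EfL, Ef0. unfold z. lia.
  - rewrite EfL, Ef0. unfold z. lia.
  - lia.
  - rewrite Hkn. exact Hkd.
  - destruct (Hidx a Ha) as [ia [Hia Ea]]. destruct (Hidx b Hb) as [ib [Hib Eb]].
    apply (Hav ia ib Hia Hib). unfold gsub, gnat. rewrite Ea, Eb in *. unfold z in C1, C2.
    f_equal; lia.
Qed.
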